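(* Let $(G,M,\Delta)$ be a Garside structure and $(H,N,\delta)$ a parabolic substructure. Put $\omega=\delta^{-1}\Delta$, $\Phi(\alpha)=\Delta\alpha\Delta^{-1}$ for $\alpha\in G$ and $\varphi(\beta)=\delta\beta\delta^{-1}$ for $\beta\in H$. Let $b\in N$. Then $b\wedge_L\omega=1$ and $b\vee_L\omega=b\omega=\omega b'$, where $b'=(\Phi^{-1}\circ\varphi)(b)$.
   Context: Let $G$ be a group and $M$ a submonoid with $M\cap M^{-1}=\{1\}$. Define $\alpha\le_L\beta$ iff $\alpha^{-1}\beta\in M$, and $\alpha\le_R\beta$ iff $\beta\alpha^{-1}\in M$. For $a\in M$ let $\mathrm{Div}_L(a)=\{b\in M: b\le_L a\}$, $\mathrm{Div}_R(a)=\{b\in M: b\le_R a\}$; $a$ is balanced if these coincide, and then $\mathrm{Div}(a)$ denotes this set. $M$ is Noetherian if each $a\in M$ admits an $n$ such that $a$ is not a product of more than $n$ non-trivial factors. A Garside structure $(G,M,\Delta)$: $\Delta\in M$ balanced, $M$ Noetherian, $\mathrm{Div}(\Delta)$ finite and generating $M$ as a monoid and $G$ as a group, $(G,\le_L)$ a lattice with meet $\wedge_L$ and join $\vee_L$. A parabolic substructure $(H,N,\delta)$: $\delta\in M$ balanced, $H$ (resp. $N$) the subgroup (resp. submonoid) generated by $\mathrm{Div}(\delta)$, and $\mathrm{Div}(\delta)=\mathrm{Div}(\Delta)\cap N$; it is assumed $H\neq\{1\}$. *)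

(* Defs.v *)
From HB Require Import structures.
From mathcomp Require Import ssreflect ssrfun ssrbool eqtype ssrnat seq choice monoid.
Set Implicit Arguments.
Unset Strict Implicit.
Unset Printing Implicit Defensive.
Local Open Scope group_scope.

Section Garside.
Variable G : groupType.
Implicit Types (M S : G -> Prop) (a b c x : G).

Definition seqprod (s : seq G) : G := foldr (fun x y => x * y) 1 s.

Definition pointed_submonoid M : Prop :=
  [/\ M 1, (forall x y, M x -> M y -> M (x * y)) &
      (forall x, M x -> M x^-1 -> x = 1)].

Definition leL M a b : Prop := M (a^-1 * b).
Definition leR M a b : Prop := M (b * a^-1).

Definition DivL M a : G -> Prop := fun b => M b /\ leL M b a.
Definition DivR M a : G -> Prop := fun b => M b /\ leR M b a.

Definition balanced M a : Prop := M a /\ forall b, DivL M a b <-> DivR M a b.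

(* Div(a) (meaningful when a is balanced) *)
Definition Div M a : G -> Prop := DivL M a.

Definition monoid_gen S : G -> Prop :=
  fun x => exists s : seq G, (forall y, y \in s -> S y) /\ x = seqprod s.

Definition group_gen S : G -> Prop :=
  monoid_gen (fun y => S y \/ S y^-1).

Definition noetherian M : Prop :=
  forall a, M a -> exists n : nat, forall s : seq G,
    (forall y, y \in s -> M y /\ y <> 1) -> seqprod s = a -> size s <= n.

Definition finite_set S : Prop :=
  exists s : seq G, forall x, S x -> x \in s.

Definition is_meetL M a b m : Prop :=
  [/\ leL M m a, leL M m b & forall c, leL M c a -> leL M c b -> leL M c m].
Definition is_joinL M a b j : Prop :=
  [/\ leL M a j, leL M b j & forall c, leL M a c -> leL M b c -> leL M j c].

Definition lattice_L M : Prop :=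
  forall a b, (exists m, is_meetL M a b m) /\ (exists j, is_joinL M a b j).

Definition garside_structure M (Delta : G) : Prop :=
  pointed_submonoid M /\
  balanced M Delta /\
  noetherian M /\
  finite_set (Div M Delta) /\
  (forall x, M x <-> monoid_gen (Div M Delta) x) /\
  (forall x, group_gen (Div M Delta) x) /\
  lattice_L M.

(* parabolic substructure (H, N, δ) of (G, M, Δ), with
   H = group_gen (Div M δ), N = monoid_gen (Div M δ), and H ≠ {1} *)
Definition parabolic_substructure M (Delta delta : G) : Prop :=
  [/\ balanced M delta,
      (forall x, Div M delta x <->
                 (Div M Delta x /\ monoid_gen (Div M delta) x)) &
      exists h, group_gen (Div M delta) h /\ h <> 1].

End Garside.

(* Main.v *)
Require Import Defs.
From HB Require Import structures.
From mathcomp Require Import ssreflect ssrfun ssrbool eqtype ssrnat seq choice monoid.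
Local Open Scope group_scope.

Ltac gs := rewrite ?(invgM, invgK, invg1, mulgA, mulgK, mulgVK, mulgV, mulVg, mul1g, mulg1); try reflexivity.

Lemma seqprod_cat {G : groupType} (s1 s2 : seq G) : seqprod (s1 ++ s2) = seqprod s1 * seqprod s2.
Proof. elim: s1 => [|x s IH] /=; first by rewrite mul1g. by rewrite IH mulgA. Qed.

Lemma mg1 {G : groupType} (S : G -> Prop) : monoid_gen S 1.
Proof. by exists [::]. Qed.

Lemma mgS {G : groupType} (S : G -> Prop) x : S x -> monoid_gen S x.
Proof. move=> Sx; exists [:: x]; split; last by rewrite /= mulg1.
by move=> y; rewrite inE => /eqP ->. Qed.

Lemma mgM {G : groupType} (S : G -> Prop) x y : monoid_gen S x -> monoid_gen S y -> monoid_gen S (x * y).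
Proof. move=> [s1 [H1 ->]] [s2 [H2 ->]]; exists (s1 ++ s2); split; last by rewrite seqprod_cat.
by move=> z; rewrite mem_cat => /orP [/H1|/H2]. Qed.

Lemma mg_conj {G : groupType} (S : G -> Prop) c x :
  (forall s, S s -> S (c^-1 * s * c)) -> monoid_gen S x -> monoid_gen S (c^-1 * x * c).
Proof.
move=> HS [s [Hs ->]]; elim: s Hs => [|y s IH] Hs /=.
  by rewrite mulg1 mulVg; apply: mg1.
have -> : c^-1 * (y * seqprod s) * c = (c^-1 * y * c) * (c^-1 * seqprod s * c) by gs.
apply: mgM; first by apply: mgS; apply: HS; apply: Hs; rewrite inE eqxx.
by apply: IH => z zs; apply: Hs; rewrite inE zs orbT.
Qed.


Definition HYP {G : groupType} (M : G -> Prop) (Delta delta : G) :=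
  garside_structure M Delta /\ parabolic_substructure M Delta delta.


Lemma Mcongr {G : groupType} (M : G -> Prop) x y : x = y -> M x -> M y.
Proof. by move=> ->. Qed.

Lemma bal_conj {G : groupType} {M : G -> Prop} {d s : G} :
  pointed_submonoid M -> balanced M d -> Div M d s ->
  Div M d (d * s * d^-1) /\ Div M d (d^-1 * s * d).
Proof.
move=> [M1 MM Ma] [Md Hb] [Ms Hsd].
have Hs : DivR M d s by apply/Hb.
case: Hs => _ Hr.
split.
- have Ht : DivL M d (d * s^-1) by split=> //; rewrite /leL; apply: Mcongr Ms; gs.
  have [_ Htr] : DivR M d (d * s^-1) by apply/Hb.
  rewrite /leR in Htr; split; first by apply: Mcongr Htr; gs.
  rewrite /leL; rewrite /leR in Hr; apply: Mcongr Hr; gs.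
- have Ht2 : DivR M d (s^-1 * d) by split=> //; rewrite /leR; apply: Mcongr Ms; gs.
  have [_ Htr2] : DivL M d (s^-1 * d) by apply/Hb.
  rewrite /leL in Htr2.
  have Mr : M (d^-1 * s * d) by apply: Mcongr Htr2; gs.
  have Hr2 : DivR M d (d^-1 * s * d).
    split=> //; rewrite /leR; rewrite /leL in Hsd; apply: Mcongr Hsd; gs.
  by apply/Hb.
Qed.

Arguments HYP {G}.

Lemma hM {G : groupType} {M : G -> Prop} {Delta delta : G} : HYP M Delta delta -> pointed_submonoid M.
Proof. by case=> [[]]. Qed.
Lemma hbalD {G : groupType} {M : G -> Prop} {Delta delta : G} : HYP M Delta delta -> balanced M Delta.
Proof. by case=> [[_ []]]. Qed.
Lemma hgen {G : groupType} {M : G -> Prop} {Delta delta : G} : HYP M Delta delta ->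
  forall x, M x <-> monoid_gen (Div M Delta) x.
Proof. by case=> [[_ [_ [_ [_ []]]]]]. Qed.
Lemma hlat {G : groupType} {M : G -> Prop} {Delta delta : G} : HYP M Delta delta -> lattice_L M.
Proof. by case=> [[_ [_ [_ [_ [_ []]]]]]]. Qed.
Lemma hnoeth {G : groupType} {M : G -> Prop} {Delta delta : G} : HYP M Delta delta -> noetherian M.
Proof. by case=> [[_ [_ []]]]. Qed.
Lemma hbald {G : groupType} {M : G -> Prop} {Delta delta : G} : HYP M Delta delta -> balanced M delta.
Proof. by case=> _ []. Qed.
Lemma hpar {G : groupType} {M : G -> Prop} {Delta delta : G} : HYP M Delta delta ->
  forall x, Div M delta x <-> (Div M Delta x /\ monoid_gen (Div M delta) x).
Proof. by case=> _ []. Qed.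

Lemma leL_trans {G : groupType} {M : G -> Prop} {a b c : G} :
  pointed_submonoid M -> leL M a b -> leL M b c -> leL M a c.
Proof. move=> [_ MM _] h1 h2; rewrite /leL; apply: Mcongr (MM _ _ h1 h2); gs. Qed.

Lemma NsubM {G : groupType} {M : G -> Prop} {Delta delta : G} x : HYP M Delta delta ->
  monoid_gen (Div M delta) x -> M x.
Proof.
move=> H [s [Hs ->]]; have [M1 MM _] := hM H.
elim: s Hs => [|y s IH] Hs //=.
apply: MM; first by case: (Hs y); rewrite ?inE ?eqxx.
by apply: IH => z zs; apply: Hs; rewrite inE zs orbT.
Qed.

Lemma Ddelta {G : groupType} {M : G -> Prop} {Delta delta : G} : HYP M Delta delta ->
  Div M delta delta.
Proof. move=> H; have [Md _] := hbald H; split=> //; rewrite /leL mulVg; by case: (hM H). Qed.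

Lemma EDdelta {G : groupType} {M : G -> Prop} {Delta delta : G} : HYP M Delta delta ->
  Div M Delta delta.
Proof. by move=> H; have /(hpar H) [] := Ddelta H. Qed.

Lemma Momega {G : groupType} {M : G -> Prop} {Delta delta : G} : HYP M Delta delta ->
  Div M Delta (delta^-1 * Delta).
Proof.
move=> H; have [Md Hd] := EDdelta H; have [MD Hb] := hbalD H.
have Hr : DivR M Delta (delta^-1 * Delta).
  split=> //; rewrite /leR; apply: Mcongr Md; gs.
by apply/Hb.
Qed.

Lemma PhiM {G : groupType} {M : G -> Prop} {Delta delta : G} x : HYP M Delta delta -> M x ->
  M (Delta * x * Delta^-1) /\ M (Delta^-1 * x * Delta).
Proof.
move=> H /(hgen H) Hx; split; apply/(hgen H).
- have := @mg_conj _ (Div M Delta) Delta^-1 x; rewrite invgK; apply=> // s Hs.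
  by have [] := bal_conj (hM H) (hbalD H) Hs.
- apply: mg_conj=> // s Hs.
  by have [] := bal_conj (hM H) (hbalD H) Hs.
Qed.

Lemma phiN {G : groupType} {M : G -> Prop} {Delta delta : G} x : HYP M Delta delta ->
  monoid_gen (Div M delta) x ->
  monoid_gen (Div M delta) (delta * x * delta^-1) /\ monoid_gen (Div M delta) (delta^-1 * x * delta).
Proof.
move=> H Hx; split.
- have := @mg_conj _ (Div M delta) delta^-1 x; rewrite invgK; apply=> // s Hs.
  by have [] := bal_conj (hM H) (hbald H) Hs.
- apply: mg_conj=> // s Hs.
  by have [] := bal_conj (hM H) (hbald H) Hs.
Qed.

Fixpoint pw {G : groupType} (d : G) (k : nat) : G :=
  match k with 0 => 1 | k'.+1 => d * pw d k' end.

Lemma Npw {G : groupType} {M : G -> Prop} {Delta delta : G} k : HYP M Delta delta ->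
  monoid_gen (Div M delta) (pw delta k).
Proof.
move=> H; elim: k => [|k IH] /=; first exact: mg1.
by apply: mgM => //; apply: mgS; apply: Ddelta H.
Qed.

Lemma Mpw {G : groupType} {M : G -> Prop} {Delta delta : G} k : HYP M Delta delta ->
  M (pw delta k).
Proof. by move=> H; apply: (NsubM _ H (Npw _ H)). Qed.

Lemma Dpw {G : groupType} {M : G -> Prop} {Delta delta : G} k x : HYP M Delta delta ->
  Div M delta x -> Div M delta ((pw delta k)^-1 * x * pw delta k).
Proof.
move=> H; elim: k x => [|k IH] x Hx /=; first by apply: Mcongr Hx; gs.
have [_ Hx'] := bal_conj (hM H) (hbald H) Hx.
have := IH _ Hx'; apply: Mcongr; gs.
Qed.

Lemma claimC {G : groupType} {M : G -> Prop} {Delta delta : G} : HYP M Delta delta ->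
  forall k s, M s -> leL M s (pw delta k) -> leL M s Delta -> leL M s delta.
Proof.
move=> H; have [M1 MM Ma] := hM H; have Md := (Ddelta H).1.
elim=> [|k IH] s Ms h1 h2.
  by rewrite /leL; apply: Mcongr (MM _ _ h1 Md); gs.
have [_ [r [Hsr Hdr Hr]]] := hlat H s delta.
have Mr : M r by apply: Mcongr (MM _ _ Ms Hsr); gs.
have Hrp : leL M r (pw delta k.+1).
  apply: Hr => //; rewrite /leL /=; apply: Mcongr (Mpw k H); gs.
have HrD : leL M r Delta by apply: Hr => //; case: (EDdelta H).
have Mr' : M (delta^-1 * r) by [].
have h1' : leL M (delta^-1 * r) (pw delta k) by rewrite /leL; apply: Mcongr (Hrp : M _); rewrite /=; gs.
have ho : leL M (delta^-1 * r) (delta^-1 * Delta) by rewrite /leL; apply: Mcongr (HrD : M _); gs.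
have h2' : leL M (delta^-1 * r) Delta by apply: leL_trans (hM H) ho (Momega H).2.
have Dr' : Div M delta (delta^-1 * r) by split=> //; apply: IH.
have Nr : monoid_gen (Div M delta) r.
  have -> : r = delta * (delta^-1 * r) by gs.
  by apply: mgM; apply: mgS => //; apply: Ddelta H.
have [_ Drd] : Div M delta r by apply/(hpar H).
exact: leL_trans (hM H) Hsr Drd.
Qed.

Lemma first_simple {G : groupType} {M : G -> Prop} {Delta delta : G} : HYP M Delta delta ->
  forall l, (forall y, y \in l -> Div M Delta y) -> seqprod l <> 1 ->
  exists s x1, [/\ Div M Delta s, s <> 1, M x1 & seqprod l = s * x1].
Proof.
move=> H; elim=> [|y l IH] Hl //= hne.
have Hl' : forall z, z \in l -> Div M Delta z by move=> z zl; apply: Hl; rewrite inE zl orbT.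
case: (eqVneq y 1) => [y1|yn1].
  rewrite y1 mul1g; apply: IH => //; by move: hne; rewrite y1 mul1g.
exists y, (seqprod l); split=> //; first by apply: Hl; rewrite inE eqxx.
  exact/eqP.
by apply/(hgen H); exists l.
Qed.

Lemma claimDn {G : groupType} {M : G -> Prop} {Delta delta : G} : HYP M Delta delta ->
  forall n x, (forall l, (forall y, y \in l -> M y /\ y <> 1) -> seqprod l = x -> size l <= n) ->
  forall k, M x -> leL M x (pw delta k) -> monoid_gen (Div M delta) x.
Proof.
move=> H; have [M1 MM Ma] := hM H.
elim=> [|n IHn] x Hn k Mx hx; (case: (eqVneq x 1) => [->|xn1]; first exact: mg1);
  have [l [Hl Hxl]] := (hgen H x).1 Mx;
  (have [s [x1 [Es sn1 Mx1 Hsx]]] : exists s x1, [/\ Div M Delta s, s <> 1, M x1 & seqprod l = s * x1]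
    by apply: (first_simple H) => //; rewrite -Hxl; exact/eqP).
- suff : size [:: x] <= 0 by [].
  apply: Hn; last by rewrite /= mulg1.
  move=> y; rewrite inE => /eqP ->; split=> //; exact/eqP.
- rewrite Hsx in Hxl; subst x.
  have hs : leL M s (s * x1) by rewrite /leL; apply: Mcongr Mx1; gs.
  have Ds : Div M delta s.
    split; first by case: Es.
    apply: (claimC H k) => //; first by case: Es.
    exact: leL_trans (hM H) hs hx.
    by case: Es.
  have hx1 : leL M x1 (pw delta k).
    have := MM _ _ hx (Dpw k s H Ds).1; apply: Mcongr; gs.
  apply: mgM; first exact: mgS.
  apply: (IHn x1 _ k Mx1 hx1) => l' Hl' e.
  have := Hn (s :: l'); rewrite /= e ltnS; apply=> // y; rewrite inE => /orP [/eqP ->|]; last exact: Hl'.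
  by split=> //; case: Es.
Qed.

Lemma claimD {G : groupType} {M : G -> Prop} {Delta delta : G} : HYP M Delta delta ->
  forall k x, M x -> leL M x (pw delta k) -> monoid_gen (Div M delta) x.
Proof.
move=> H k x Mx hx; have [n Hn] := hnoeth H x Mx.
exact: (claimDn H n x Hn k).
Qed.

Lemma Dcompl {G : groupType} {M : G -> Prop} {Delta delta : G} : HYP M Delta delta ->
  forall s, Div M delta s -> Div M delta (s^-1 * delta).
Proof.
move=> H s Ds; split; first by case: Ds.
have [_ [Mr _]] := bal_conj (hM H) (hbald H) Ds.
by rewrite /leL; apply: Mcongr Mr; gs.
Qed.

Lemma Nle {G : groupType} {M : G -> Prop} {Delta delta : G} : HYP M Delta delta ->
  forall a, monoid_gen (Div M delta) a -> exists k, leL M a (pw delta k).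
Proof.
move=> H a [l [Hl ->]]; have [M1 MM Ma] := hM H.
elim: l Hl => [|s l IH] Hl /=.
  by exists 0; rewrite /leL; apply: Mcongr M1; gs.
have [k hk] : exists k, leL M (seqprod l) (pw delta k)
  by apply: IH => z zl; apply: Hl; rewrite inE zl orbT.
have Ds : Div M delta s by apply: Hl; rewrite inE eqxx.
exists k.+1; have := MM _ _ hk (Dpw k _ H (Dcompl H s Ds)).1.
by rewrite /leL /=; apply: Mcongr; gs.
Qed.

Lemma Nleft {G : groupType} {M : G -> Prop} {Delta delta : G} : HYP M Delta delta ->
  forall x a, M x -> leL M x a -> monoid_gen (Div M delta) a -> monoid_gen (Div M delta) x.
Proof.
move=> H x a Mx hxa Na; have [k hk] := Nle H _ Na.
exact: (claimD H k x Mx (leL_trans (hM H) hxa hk)).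
Qed.

Lemma Nright {G : groupType} {M : G -> Prop} {Delta delta : G} : HYP M Delta delta ->
  forall x g, M x -> M g -> monoid_gen (Div M delta) (g * x) -> monoid_gen (Div M delta) x.
Proof.
move=> H x g Mx Mg Na; have [M1 MM Ma] := hM H.
have [k hk] := Nle H _ Na.
have hg : leL M g (pw delta k) by have := MM _ _ Mx hk; rewrite /leL; apply: Mcongr; gs.
have Ng := claimD H k g Mg hg.
have Ng' : monoid_gen (Div M delta) ((pw delta k)^-1 * g * pw delta k).
  apply: mg_conj; last exact: Ng. by move=> s Ds; exact: Dpw k s H Ds.
have Mg' := NsubM _ H Ng'.
apply: (claimD H k x Mx); have := MM _ _ hk Mg'; rewrite /leL; apply: Mcongr; gs.
Qed.

Theorem lemma3p5 (G : groupType) (M : G -> Prop) (Delta delta b : G) :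
  garside_structure M Delta ->
  parabolic_substructure M Delta delta ->
  monoid_gen (Div M delta) b ->
  let omega := delta^-1 * Delta in
  let b' := Delta^-1 * ((delta * b * delta^-1) * Delta) in
  [/\ is_meetL M b omega 1,
      is_joinL M b omega (b * omega) &
      b * omega = omega * b'].
Proof.
move=> Hg Hp Hb omega b'; rewrite /omega /b'.
have H : HYP M Delta delta by split.
have [M1 MM Ma] := hM H.
have Mb := NsubM _ H Hb.
have [Mo Hod] := Momega H.
have Md := (Ddelta H).1.
have Na : monoid_gen (Div M delta) (delta * b * delta^-1) := (phiN _ H Hb).1.
have Mb' := (PhiM _ H (NsubM _ H Na)).2.
have h1 : leL M b (b * (delta^-1 * Delta)) by rewrite /leL; apply: Mcongr Mo; gs.
have h2 : leL M (delta^-1 * Delta) (b * (delta^-1 * Delta)) by rewrite /leL; apply: Mcongr Mb'; gs.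
split.
- split; [by rewrite /leL; apply: Mcongr Mb; gs | by rewrite /leL; apply: Mcongr Mo; gs |].
  move=> c hc1 hc2.
  have [[m [hmb hmo hm]] _] := hlat H b (delta^-1 * Delta).
  have Mm : M m.
    have := hm 1; rewrite /leL; rewrite ?invg1 ?mul1g; apply=> //.
  have Nm := Nleft H m b Mm hmb Hb.
  have Ddm : Div M delta (delta * m).
    apply/(hpar H); split; last by apply: mgM => //; apply: mgS; apply: Ddelta H.
    split; first exact: MM.
    by rewrite /leL; apply: Mcongr (hmo : M _); gs.
  have [_ hdm] := Ddm.
  have Mmi : M m^-1 by apply: Mcongr (hdm : M _); gs.
  rewrite /leL; apply: Mcongr (MM _ _ (hm c hc1 hc2 : M _) Mmi); gs.
- split=> // c hc1 hc2.
  have [_ [j [hbj hoj hj]]] := hlat H b (delta^-1 * Delta).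
  have hjb := hj _ h1 h2.
  suff hk : leL M (b * (delta^-1 * Delta)) j by apply: leL_trans hk (hj c hc1 hc2).
  have My : M (b^-1 * j) := hbj.
  have Ew : Div M Delta (delta * (b^-1 * j)).
    split; first exact: MM.
    by rewrite /leL; apply: Mcongr (hjb : M _); gs.
  have [_ Mu] : DivR M Delta (delta * (b^-1 * j)) by apply/((hbalD H).2 _).
  rewrite /leR in Mu.
  have Mg : M (delta * b * delta^-1 * (Delta * (delta * (b^-1 * j))^-1)^-1).
    have := (PhiM _ H (hoj : M _)).1; apply: Mcongr; gs.
  have Nu : monoid_gen (Div M delta) (Delta * (delta * (b^-1 * j))^-1).
    apply: (Nright H _ _ Mu Mg).
    have -> : delta * b * delta^-1 * (Delta * (delta * (b^-1 * j))^-1)^-1 *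
      (Delta * (delta * (b^-1 * j))^-1) = delta * b * delta^-1 by gs.
    exact: Na.
  have Dud : Div M delta (Delta * (delta * (b^-1 * j))^-1 * delta).
    apply/(hpar H); split; last by apply: mgM => //; apply: mgS; apply: Ddelta H.
    split; first exact: MM.
    by rewrite /leL; apply: Mcongr My; gs.
  have [_ Mui] : DivR M delta (Delta * (delta * (b^-1 * j))^-1 * delta) by apply/((hbald H).2 _).
  rewrite /leR in Mui.
  have u1 : Delta * (delta * (b^-1 * j))^-1 = 1.
    by apply: Ma => //; apply: Mcongr Mui; gs.
  have eD : Delta = delta * (b^-1 * j).
    by apply: (mulIg (delta * (b^-1 * j))^-1); rewrite u1 mulgV.
  rewrite /leL eD; apply: Mcongr M1; gs.
- gs.
Qed.
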